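(* Let $\alpha=(\alpha_1,\dots,\alpha_n)$ be a composition, $\lambda$ a partition, and $k\ge0$ an integer with $\lambda_1-k\le n$. Let $T$ be a semistandard Young tableau of shape $\lambda\oplus\Delta_\alpha$ with lattice reading word such that the first row of $\lambda$ in $T$ contains at most $k$ entries equal to $1$. Then the tableau of shape $\mathcal{S}(\lambda,\alpha;k)$ obtained from $T$ by keeping the filling of $\Delta_\alpha$ and moving the filled copy of $\lambda$ (unchanged) to the right into the foundation position of $\mathcal{S}(\lambda,\alpha;k)$ is also a semistandard Young tableau with lattice reading word.
   Context: Diagrams use English convention: boxes $(r,c)$ with row index increasing downward, column index increasing rightward. For a composition $\alpha=(\alpha_1,\dots,\alpha_n)$, $|\alpha|=\sum_i\alpha_i$, and $\Delta_\alpha$ is the $180^\circ$ rotation of the Ferrers diagram of the partition $(n^{\alpha_n},(n-1)^{\alpha_{n-1}},\dots,1^{\alpha_1})$; it occupies rows $1,\dots,|\alpha|$, each row right-justified ending in column $n$, with $\alpha_i$ rows of length $i$, row lengths weakly increasing downward. For diagrams $D_1,D_2$, the direct sum $D_1\oplus D_2$ is the diagram consisting of disjoint copies of $D_1$ and $D_2$ placed so that the top-right box of $D_1$ is one step left and one step down from the bottom-left box of $D_2$. For $k\ge0$ and a partition $\lambda$ with $\lambda_1-k\le n$, $\mathcal{S}(\lambda,\alpha;k)$ consists of $\Delta_\alpha$ together with a copy of the Ferrers diagram of $\lambda$ (the foundation) placed so that row $r$ of $\lambda$ occupies row $|\alpha|+r$, columns $1-k$ through $\lambda_r-k$ (the first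 row of $\lambda$ starts one row below and $k$ columns left of the bottom-left box of $\Delta_\alpha$). A tableau is a filling of boxes by positive integers; it is semistandard if rows weakly increase left to right and columns strictly increase top to bottom. The reading word reads rows right to left, top row to bottom row; a sequence is lattice if in every initial segment, for every $j\ge1$, the number of $j$'s is at least the number of $(j+1)$'s. *)

(* Defs.v *)
From mathcomp Require Import all_boot all_order all_algebra.
Set Implicit Arguments. Unset Strict Implicit. Unset Printing Implicit Defensive.
Import Order.TTheory GRing.Theory Num.Theory.
Local Open Scope ring_scope.

(* A box (r, c): row r (increasing downward), column c (increasing rightward).
   Columns may be nonpositive (the foundation starts in column 1-k). *)
Definition box := (int * int)%type.
Definition diagram := seq box.

Definition translate (d : box) (D : diagram) : diagram :=
  [seq (b.1 + d.1, b.2 + d.2) | b <- D].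

Definition top_row (D : diagram) : int :=
  foldr (fun b m => Num.min b.1 m) (head (0, 0) D).1 D.
Definition bot_row (D : diagram) : int :=
  foldr (fun b m => Num.max b.1 m) (head (0, 0) D).1 D.
Definition cols_in_row (D : diagram) (r : int) : seq int :=
  [seq b.2 | b <- D & b.1 == r].
Definition max_col_in (D : diagram) (r : int) : int :=
  foldr Num.max (head 0 (cols_in_row D r)) (cols_in_row D r).
Definition min_col_in (D : diagram) (r : int) : int :=
  foldr Num.min (head 0 (cols_in_row D r)) (cols_in_row D r).

Definition top_right (D : diagram) : box := (top_row D, max_col_in D (top_row D)).
Definition bottom_left (D : diagram) : box := (bot_row D, min_col_in D (bot_row D)).

Definition dsum_shift (D1 D2 : diagram) : box :=
  ((bottom_left D2).1 + 1 - (top_right D1).1,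
   (bottom_left D2).2 - 1 - (top_right D1).2).

(* D1 (+) D2: D2 fixed, D1 translated so that its top-right box is one step
   left and one step down from the bottom-left box of D2. *)
Definition direct_sum (D1 D2 : diagram) : diagram :=
  translate (dsum_shift D1 D2) D1 ++ D2.

Definition is_composition (al : seq nat) : bool := all (fun x => 0 < x)%N al.
Definition is_partition (lam : seq nat) : bool :=
  sorted geq lam && all (fun x => 0 < x)%N lam.

(* Ferrers diagram of lam with row i (1-indexed) in row ro + i and
   columns co + 1 .. co + lam_i *)
Definition place (lam : seq nat) (ro co : int) : diagram :=
  flatten [seq [seq (ro + (i.+1)%:Z, co + (j.+1)%:Z) | j <- iota 0 (nth 0%N lam i)]
          | i <- iota 0 (size lam)].
Definition ferrers (lam : seq nat) : diagram := place lam 0 0.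

Definition Delta_rowlens (al : seq nat) : seq nat :=
  flatten [seq nseq (nth 0%N al i) i.+1 | i <- iota 0 (size al)].
(* row r (0-indexed, i.e. diagram row r+1) of length l, right-justified at column n *)
Definition Delta_row (n r l : nat) : diagram :=
  [seq ((r.+1)%:Z, (n - l + j + 1)%N%:Z) | j <- iota 0 l].
Definition Delta (al : seq nat) : diagram :=
  let ls := Delta_rowlens al in
  flatten [seq Delta_row (size al) r (nth 0%N ls r) | r <- iota 0 (size ls)].

(* S(lam, al; k): Delta_al together with the foundation lam, row r of lam in
   row |al| + r, columns 1-k .. lam_r - k. *)
Definition foundation (lam al : seq nat) (k : nat) : diagram :=
  place lam (sumn al)%:Z (- k%:Z).
Definition S_shape (lam al : seq nat) (k : nat) : diagram :=
  Delta al ++ foundation lam al k.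

Definition lam_copy (lam al : seq nat) : diagram :=
  translate (dsum_shift (ferrers lam) (Delta al)) (ferrers lam).

Definition tableau (D : diagram) (T : box -> nat) : Prop :=
  forall b, b \in D -> (0 < T b)%N.

Definition semistandard (D : diagram) (T : box -> nat) : Prop :=
  tableau D T /\
  (forall b b', b \in D -> b' \in D -> b.1 = b'.1 -> b.2 < b'.2 -> (T b <= T b')%N) /\
  (forall b b', b \in D -> b' \in D -> b.2 = b'.2 -> b.1 < b'.1 -> (T b < T b')%N).

(* reading order: rows top to bottom, each row right to left *)
Definition read_le (b b' : box) : bool :=
  (b.1 < b'.1) || ((b.1 == b'.1) && (b'.2 <= b.2)).
Definition reading_word (D : diagram) (T : box -> nat) : seq nat :=
  map T (sort read_le D).

Definition lattice (w : seq nat) : Prop :=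
  forall i j : nat, (0 < j)%N ->
    (count_mem j.+1 (take i w) <= count_mem j (take i w))%N.

Definition moved_tableau (lam al : seq nat) (k : nat) (T : box -> nat) : box -> nat :=
  fun b =>
    if b \in Delta al then T b
    else let d := dsum_shift (ferrers lam) (Delta al) in
         T (b.1 - (sumn al)%:Z + d.1, b.2 + k%:Z + d.2).

(* Main.v *)
Require Import Defs.
From mathcomp Require Import all_boot all_order all_algebra.
From mathcomp Require Import zify ring lra.

Definition Gh (n : nat) (l : nat -> nat) (K c : nat) : nat :=
  \sum_(0 <= r < K) (n - l r <= c).

Lemma Gh0 n l c : Gh n l 0 c = 0.
Proof. by rewrite /Gh big_geq. Qed.
Lemma GhS n l K c : Gh n l K.+1 c = Gh n l K c + (n - l K <= c).
Proof. by rewrite /Gh big_nat_recr. Qed.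
Lemma Gh_mono n l K c c' : c <= c' -> Gh n l K c <= Gh n l K c'.
Proof.
move=> cc; elim: K => [|K IH]; first by rewrite !Gh0.
rewrite !GhS; apply: leq_add => //.
case: (n - l K <= c) /idP => h; last by [].
by rewrite (leq_trans h cc).
Qed.

Lemma leq_sum_range (n : nat) (f g : nat -> nat) :
  (forall i, i < n -> f i <= g i) ->
  \sum_(0 <= i < n) f i <= \sum_(0 <= i < n) g i.
Proof.
move=> fg; rewrite !big_seq; apply: leq_sum => i; rewrite mem_index_iota.
by move=> /andP[_ h]; apply: fg.
Qed.

Lemma eq_sum_range (n : nat) (f g : nat -> nat) :
  (forall i, i < n -> f i = g i) ->
  \sum_(0 <= i < n) f i = \sum_(0 <= i < n) g i.
Proof.
move=> fg; rewrite !big_seq; apply: eq_bigr => i; rewrite mem_index_iota.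
by move=> /andP[_ h]; apply: fg.
Qed.

Lemma sum_lt_strict (n C : nat) (f g : nat -> nat) :
  (forall i, i < n -> f i <= g i) -> C < n -> f C < g C ->
  \sum_(0 <= i < n) f i < \sum_(0 <= i < n) g i.
Proof.
elim: n => [|n IH] // fg Cn fgC.
rewrite !big_nat_recr //=.
case: (ltngtP C n) => h.
- apply: leq_trans (leq_add (IH _ h fgC) (fg n (ltnSn n))); first by rewrite addSn.
  by move=> i ih; apply: fg; rewrite ltnS ltnW.
- by move: Cn; rewrite ltnS leqNgt h.
- subst C; rewrite -addnS; apply: leq_add => //.
  by apply: leq_sum_range => i ih; apply: fg; rewrite ltnS ltnW.
Qed.

Lemma sum_indicator_lt (L b : nat) : \sum_(0 <= j < L) (j < b) = minn L b.
Proof.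
elim: L => [|L IH]; first by rewrite big_geq // min0n.
rewrite big_nat_recr //= IH; case: (ltnP L b) => h /=; lia.
Qed.

Lemma sum_indicator_range (L a b : nat) :
  \sum_(0 <= j < L) ((a <= j) && (j < b)) = minn L b - a.
Proof.
elim: L => [|L IH]; first by rewrite big_geq // min0n.
rewrite big_nat_recr //= IH; case: (leqP a L) => h1; case: (ltnP L b) => h2 /=; lia.
Qed.

Lemma sum_eq1 (m R x : nat) : R < m ->
  \sum_(0 <= r < m) ((r == R) * x) = x.
Proof.
elim: m => [|m IH] //; rewrite ltnS leq_eqVlt => /orP[/eqP ->|h].
  rewrite big_nat_recr //= eqxx mul1n big1_seq ?add0n // => r /andP[_].
  by rewrite mem_index_iota => /andP[_ /ltn_eqF ->].
by rewrite big_nat_recr //= IH // (gtn_eqF h) mul0n addn0.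
Qed.

Lemma colsum n l K c v :
  \sum_(0 <= r < K) ((n - l r <= c) && (Gh n l r.+1 c == v)) =
  ((1 <= v) && (v <= Gh n l K c)).
Proof.
elim: K => [|K IH]; first by rewrite big_geq // Gh0; case: v => [|[]].
rewrite big_nat_recr //= IH !GhS.
case: (n - l K <= c) => /=; last by rewrite !addn0.
set g := Gh n l K c. clear IH.
case: (ltngtP v (g+1)) => h; case: (leqP v g) => h2; case: v h h2 => [|v] h h2 //=; lia.
Qed.

Lemma sum_prefix (m R : nat) (Q : nat -> nat) : R <= m ->
  \sum_(0 <= r < m) ((r < R) * Q r) = \sum_(0 <= r < R) Q r.
Proof.
move=> Rm; rewrite (@big_cat_nat _ _ _ R) //=.
rewrite [X in _ + X]big1_seq ?addn0; last first.
  by move=> r /andP[_]; rewrite mem_index_iota => /andP[/leq_gtF -> _].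
by apply: eq_sum_range => r ->; rewrite mul1n.
Qed.

Lemma Gh_zero n l K c : (forall r, r < K -> c < n - l r) -> Gh n l K c = 0.
Proof.
move=> h; rewrite /Gh big1_seq // => r /andP[_]; rewrite mem_index_iota.
by move=> /andP[_ /h]; rewrite ltnNge => /negbTE ->.
Qed.

Definition cntD (n m : nat) (l : nat -> nat) (t : nat -> nat -> nat) (R C v : nat) :=
  \sum_(0 <= r < m) \sum_(0 <= c < n)
     ((n - l r <= c) && ((r < R) || ((r == R) && (C <= c))) && (t r c == v)).

Lemma LR (n m : nat) (l : nat -> nat) (t : nat -> nat -> nat) :
  (forall r r', r <= r' -> r' < m -> l r <= l r') ->
  (forall r c, r < m -> c < n -> n - l r <= c -> 0 < t r c) ->
  (forall r c c', r < m -> c < c' -> c' < n -> n - l r <= c -> t r c <= t r c') ->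
  (forall r r' c, r < r' -> r' < m -> c < n -> n - l r <= c -> t r c < t r' c) ->
  (forall R C j, R < m -> C < n -> n - l R <= C -> 0 < j ->
     cntD n m l t R C j.+1 <= cntD n m l t R C j) ->
  forall R C, R < m -> C < n -> n - l R <= C -> t R C = Gh n l R.+1 C.
Proof.
move=> lmono tpos trow tcol lat.
have LB : forall R C, R < m -> C < n -> n - l R <= C -> Gh n l R.+1 C <= t R C.
  elim=> [|R IH] C Rm Cn hRC.
    by rewrite GhS Gh0 hRC; apply: tpos.
  rewrite GhS hRC addn1.
  case hR: (n - l R <= C).
    apply: leq_ltn_trans (IH C (ltnW Rm) Cn hR) _.
    by apply: tcol.
  rewrite Gh_zero; first by apply: tpos.
  move=> r rR; have := lmono r R; move: hR; lia.
elim/ltn_ind => R IHR.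
suff: forall d C, n - C <= d -> R < m -> C < n -> n - l R <= C -> t R C = Gh n l R.+1 C.
  by move=> h C; apply: h (leqnn _).
elim=> [|d IHd] C dC Rm Cn hRC; first by move: dC Cn; lia.
have lb := LB R C Rm Cn hRC.
set e := t R C in lb *.
case: (ltngtP e (Gh n l R.+1 C)) => // h; first by move: lb; rewrite leqNgt h.
exfalso.
have gS : Gh n l R.+1 C = Gh n l R C + 1 by rewrite GhS hRC.
have IHc : forall c, C < c -> c < n -> t R c = Gh n l R.+1 c.
  move=> c Cc cn; apply: IHd => //; [lia | lia].
have col : forall v c, c < n ->
   \sum_(0 <= r < m) ((n - l r <= c) && ((r < R) || ((r == R) && (C <= c))) && (t r c == v))
   = ((1 <= v) && (v <= Gh n l R c)) + ((C <= c) && (t R c == v)).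
  move=> v c cn.
  rewrite -colsum -(@sum_prefix m R (fun r => (n - l r <= c) && (Gh n l r.+1 c == v)) (ltnW Rm)) -(@sum_eq1 m R ((C <= c) && (t R c == v)) Rm).
  rewrite -big_split /=; apply: eq_sum_range => r rm.
  case: (ltngtP r R) => rR /=.
  - rewrite mul1n mul0n addn0; case hr: (n - l r <= c) => //=.
    by rewrite IHR.
  - by rewrite andbF !mul0n.
  - rewrite mul0n mul1n add0n rR; case Cc: (C <= c); rewrite ?andbF //=.
    by rewrite (leq_trans hRC Cc).
have cntE : forall v, cntD n m l t R C v =
   \sum_(0 <= c < n) (((1 <= v) && (v <= Gh n l R c)) + ((C <= c) && (t R c == v))).
  move=> v; rewrite /cntD exchange_big /=; apply: eq_sum_range => c cn.
  by rewrite col.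
have e2 : 1 < e by move: h gS; lia.
have := lat R C e.-1 Rm Cn hRC (ltac:(move: e2; lia)).
rewrite prednK ?(ltnW e2) // !cntE leqNgt => /negP; apply.
apply: (@sum_lt_strict _ C) => //; last first.
  rewrite leqnn eqxx /= -/e; move: h gS; lia.
move=> c cn.
case: (ltngtP c C) => cC.
- have : Gh n l R c <= Gh n l R C by apply: Gh_mono; apply: ltnW.
  move: h gS; lia.
- have hc := IHc c cC cn.
  have mono : Gh n l R.+1 C.+1 <= Gh n l R.+1 c by apply: Gh_mono.
  have eu : e <= Gh n l R.+1 C.+1.
    rewrite -(IHc C.+1 (ltnSn C)) ?(leq_ltn_trans cC cn) //.
    by apply: trow => //; apply: leq_ltn_trans cC cn.
  rewrite hc GhS (leq_trans hRC (ltnW cC)) /=.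
  move: mono eu; rewrite !GhS; lia.
- have ce : C = c by [].
  rewrite -ce -/e /=; move: h gS; lia.
Qed.

Lemma lamarg (n L k c : nat) (H X CD : nat -> nat) :
  c < n -> c + k < L ->
  (forall c1 c2, c1 <= c2 -> H c1 <= H c2) ->
  (forall v, CD v = \sum_(0 <= c' < n) ((1 <= v) && (v <= H c'))) ->
  (forall j j', j <= j' -> j' < L -> X j <= X j') ->
  (forall j, j < L -> 0 < X j) ->
  \sum_(0 <= j < L) (X j == 1) <= k ->
  (forall q w, 0 < w -> CD w.+1 + \sum_(0 <= j < L) ((q <= j) && (X j == w.+1))
                 <= CD w + \sum_(0 <= j < L) ((q <= j) && (X j == w))) ->
  H c < X (c + k).
Proof.
move=> cn ckL Hmono CDE Xmono Xpos ones lat.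
have claim1 : forall w, 0 < w ->
    \sum_(0 <= j < L) ((2 <= X j) && (X j <= w)) + CD w <= CD 1.
  elim=> [//|w IH] _.
  case: w IH => [|w] IH.
    rewrite big1_seq ?add0n // => j _; case: (X j) => [|[|x]] //.
  have IH' := IH (ltn0Sn w).
  have split : \sum_(0 <= j < L) ((2 <= X j) && (X j <= w.+2)) =
     \sum_(0 <= j < L) ((2 <= X j) && (X j <= w.+1)) + \sum_(0 <= j < L) (X j == w.+2).
    rewrite -big_split /=; apply: eq_sum_range => j _; lia.
  have ex : exists j, (L <= j) || (w.+2 <= X j) by exists L; rewrite leqnn.
  have [q Pq qmin] := ex_minnP ex.
  have := lat q w.+1 (ltn0Sn w).
  have E1 : \sum_(0 <= j < L) ((q <= j) && (X j == w.+2)) = \sum_(0 <= j < L) (X j == w.+2).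
    apply: eq_sum_range => j jL; case: (leqP q j) => //= jq.
    case: (X j =P w.+2) => // xj.
    have := qmin j; rewrite xj leqnn orbT => /(_ isT); rewrite leqNgt jq.
    by [].
  have E2 : \sum_(0 <= j < L) ((q <= j) && (X j == w.+1)) = 0.
    rewrite big1_seq // => j; rewrite mem_index_iota => /andP[_ /andP[_ jL]].
    case: (leqP q j) => //= qj.
    have qL : q < L by apply: leq_ltn_trans qj jL.
    move: Pq; rewrite leqNgt qL /= => Xq.
    have := Xmono q j qj jL; move: Xq; lia.
  rewrite E1 E2 addn0 => h.
  rewrite split; move: IH' h; lia.
have onesk : forall j, j < L -> X j = 1 -> j < k.
  move=> j jL xj.
  have : \sum_(0 <= j' < L) (j' < j.+1) <= \sum_(0 <= j' < L) (X j' == 1).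
    apply: leq_sum_range => j' j'L; case: (ltnP j' j.+1) => //= hj.
    have := Xmono j' j hj jL; have := Xpos j' j'L; rewrite xj; lia.
  rewrite sum_indicator_lt; move: ones jL; lia.
rewrite ltnNge; apply/negP => vle.
set v := X (c + k) in vle.
have v2 : 2 <= v.
  have := Xpos (c + k) ckL; rewrite -/v => vp.
  case: (v =P 1) => [E|E]; first by have := onesk _ ckL E; lia.
  lia.
have low : c.+1 <= \sum_(0 <= j < L) ((2 <= X j) && (X j <= v)).
  have : \sum_(0 <= j < L) ((k <= j) && (j < c + k + 1)) <=
         \sum_(0 <= j < L) ((2 <= X j) && (X j <= v)).
    apply: leq_sum_range => j jL.
    case: (leqP k j) => //= kj; case: (ltnP j (c + k + 1)) => //= jc.
    have h1 := Xmono j (c + k) (ltac:(lia)) ckL.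
    have h2 := Xpos j jL.
    case E1: (X j == 1); first by have := onesk j jL (eqP E1); lia.
    move/negbT: E1; rewrite -/v; lia.
  rewrite sum_indicator_range; move: ckL; lia.
have up : CD 1 <= c + CD v.
  rewrite !CDE; have : \sum_(0 <= c' < n) ((1 <= 1) && (1 <= H c')) <=
      \sum_(0 <= c' < n) ((c' < c) + ((1 <= v) && (v <= H c'))).
    apply: leq_sum_range => c' c'n.
    case: (ltnP c' c) => //= cc; first by lia.
    have := Hmono _ _ cc; lia.
  by rewrite big_split /= sum_indicator_lt; move: cn; lia.
have := claim1 v (ltac:(lia)); move: low up; lia.
Qed.

Import Order.TTheory GRing.Theory Num.Theory.

Lemma size_rowlens al : size (Delta_rowlens al) = sumn al.
Proof.
rewrite /Delta_rowlens size_flatten /shape -map_comp.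
rewrite (eq_map (g := nth 0 al)); last by move=> i /=; rewrite size_nseq.
by rewrite map_nth_iota0 // take_size.
Qed.

Lemma rowlens_mem al x : x \in Delta_rowlens al -> 0 < x <= size al.
Proof.
move=> /flattenP[s /mapP[i]]; rewrite mem_iota add0n => /andP[_ iab] -> /nseqP[-> _].
by rewrite ltn0Sn.
Qed.

Lemma rowlens_sorted al : sorted leq (Delta_rowlens al).
Proof.
rewrite sorted_pairwise; last by exact: leq_trans.
rewrite /Delta_rowlens; elim: (size al) => [|N IH] //.
rewrite -addn1 iotaD map_cat flatten_cat pairwise_cat IH /= cats0 add0n.
apply/andP; split.
  apply/allrelP => x y /flattenP[s /mapP[i]]; rewrite mem_iota add0n => /andP[_ iN] ->.
  move=> /nseqP [-> _] /nseqP [-> _]; by rewrite ltnS ltnW.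
elim: (nth 0 al N) => [|a IHa] //=; rewrite IHa andbT.
by apply/allP => x /nseqP [-> _].
Qed.

Lemma rowlens_last al : is_composition al -> al != [::] ->
  last 0 (Delta_rowlens al) = size al.
Proof.
move=> comp; case/lastP: al comp => [//|al a] comp _.
rewrite /Delta_rowlens size_rcons -addn1 iotaD map_cat flatten_cat /= cats0 add0n.
have : 0 < nth 0 (rcons al a) (size al).
  by rewrite nth_rcons ltnn eqxx; move: comp; rewrite /is_composition all_rcons => /andP[].
case: (nth 0 (rcons al a) (size al)) => [//|x] _.
by rewrite last_cat /= addn1; elim: x => [|x IH] //=.
Qed.

Lemma memDelta al b : b \in Delta al <->
  exists r c, [/\ r < sumn al, c < size al, size al - nth 0 (Delta_rowlens al) r <= c
            & b = (Posz r.+1, Posz c.+1)].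
Proof.
have lsb := @rowlens_mem al.
rewrite /Delta size_rowlens; split.
  move=> /flattenP[s /mapP[r]]; rewrite mem_iota add0n => /andP[_ rm] ->.
  move=> /mapP[j]; rewrite mem_iota add0n => /andP[_ jl] ->.
  set l := nth 0 (Delta_rowlens al) r in jl *.
  have ln : l <= size al.
    have : l \in Delta_rowlens al by rewrite mem_nth // size_rowlens.
    by move=> /lsb /andP[].
  exists r, (size al - l + j); split => //; first by lia.
    by rewrite leq_addr.
  by rewrite addn1.
move=> [r [c [rm cn hc ->]]].
apply/flattenP; exists (Delta_row (size al) r (nth 0 (Delta_rowlens al) r)).
  by apply/mapP; exists r => //; rewrite mem_iota add0n.
set l := nth 0 (Delta_rowlens al) r in hc *.
apply/mapP; exists (c - (size al - l)).
  rewrite mem_iota add0n; lia.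
by congr (_, _); congr Posz; lia.
Qed.

Lemma count_sumE (T : Type) (P : pred T) (s : seq T) :
  count P s = \sum_(x <- s) P x.
Proof. by rewrite -sumn_count sumnE big_map. Qed.

Lemma countDelta al (P : pred box) : count P (Delta al) =
  \sum_(0 <= r < sumn al) \sum_(0 <= c < size al)
     ((size al - nth 0 (Delta_rowlens al) r <= c) && P (Posz r.+1, Posz c.+1)).
Proof.
rewrite /Delta size_rowlens count_flatten sumnE !big_map.
have -> : iota 0 (sumn al) = index_iota 0 (sumn al) by rewrite /index_iota subn0.
apply: eq_bigr => r _.
set l := nth 0 (Delta_rowlens al) r.
have ln : l <= size al.
  case: (ltnP r (sumn al)) => rm.
    have : l \in Delta_rowlens al by rewrite mem_nth // size_rowlens.
    by move=> /rowlens_mem /andP[].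
  by rewrite /l nth_default // size_rowlens.
rewrite /Delta_row count_map count_sumE.
rewrite (@big_cat_nat _ _ _ (size al - l)) ?leq_subr //=.
rewrite [X in _ = X + _]big1_seq ?add0n; last first.
  by move=> c /andP[_]; rewrite mem_index_iota => /andP[_ h]; rewrite leqNgt h.
rewrite (_ : \sum_(size al - l <= i < size al) _ =
   \sum_(0 + (size al - l) <= i < size al) ((size al - l <= i) && P (Posz r.+1, Posz i.+1))); last first.
  by rewrite add0n.
rewrite big_addn subKn //.
rewrite /index_iota subn0; apply: eq_bigr => j _ /=.
rewrite leq_addl /=; congr (P (_, _)); congr Posz; lia.
Qed.

Local Open Scope ring_scope.

Lemma read_le_trans : transitive read_le.
Proof. move=> [a1 a2] [b1 b2] [c1 c2]; rewrite /read_le /=.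
move=> /orP[h|/andP[/eqP h h']] /orP[h2|/andP[/eqP h2 h2']]; apply/orP; lia. Qed.
Lemma read_le_total : total read_le.
Proof. move=> [a1 a2] [b1 b2]; rewrite /read_le /=.
case: (ltgtP a1 b1) => h /=; [by []|by []|by rewrite le_total]. Qed.
Lemma read_le_anti : antisymmetric read_le.
Proof. move=> [a1 a2] [b1 b2]; rewrite /read_le /= => /andP[].
move=> /orP[h|/andP[/eqP h h']] /orP[h2|/andP[/eqP h2 h2']]; try lia.
have -> : a2 = b2 by lia. by rewrite h. Qed.

Lemma filter_take_sorted (T : eqType) (r : rel T) (P : pred T) s :
  transitive r -> (forall a b, r a b -> P b -> P a) -> sorted r s ->
  filter P s = take (count P s) s.
Proof.
move=> tr Pc; elim: s => [|a s IH] //= srt.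
have srt' : sorted r s by move: srt; apply: path_sorted.
have amin := order_path_min tr srt.
case Pa: (P a) => /=; first by rewrite IH.
have h : forall y, y \in s -> P y = false.
  move=> y ys; apply/negbTE/negP => Py.
  by move: (allP amin y ys) => ray; rewrite (Pc _ _ ray Py) in Pa.
rewrite (eq_in_filter (a2 := pred0)) ?filter_pred0; last by move=> y /h ->.
by rewrite (eq_in_count (a2 := pred0)) ?count_pred0 // => y /h ->.
Qed.

Lemma lattice_cnt (D : diagram) (T : box -> nat) (x : box) (j : nat) :
  lattice (reading_word D T) -> (0 < j)%N ->
  (count (fun y => read_le y x && (T y == j.+1)) D <=
   count (fun y => read_le y x && (T y == j)) D)%N.
Proof.
move=> lat j0.
set s := sort read_le D.
have srt : sorted read_le s by apply: sort_sorted; apply: read_le_total.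
have pe : perm_eq s D by rewrite perm_sort.
have ft := @filter_take_sorted _ read_le (fun y => read_le y x) s read_le_trans
   (fun a b ab bx => read_le_trans _ _ _ ab bx) srt.
have := lat (count (fun y => read_le y x) s) j j0.
rewrite /reading_word -/s -map_take -ft !count_map !count_filter.
rewrite !(permP pe).
move=> h; apply: leq_trans (leq_trans h _). apply: eq_leq; apply: eq_count => y /=; by rewrite andbC.
apply: eq_leq; apply: eq_count => y /=; by rewrite andbC.
Qed.

Lemma foldr_min_eq (s : seq int) x0 v : v \in s -> (forall y, y \in s -> v <= y) ->
  v <= x0 -> foldr Num.min x0 s = v.
Proof.
move=> vs allv vx.
have lb : v <= foldr Num.min x0 s.
  elim: s {vs} allv => [|a s IH] allv /=; first exact: vx.
  rewrite le_min (allv a (mem_head a s)) /=; apply: IH => y ys; apply: allv.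
  by rewrite in_cons ys orbT.
have ub : forall y, y \in s -> foldr Num.min x0 s <= y.
  elim: s {vs allv lb} => [|a s IH] //= y; rewrite in_cons => /orP[/eqP ->|ys].
    by rewrite ge_min lexx.
  by rewrite ge_min (IH y ys) orbT.
by apply/eqP; rewrite eq_le lb ub.
Qed.

Lemma foldr_max_eq (s : seq int) x0 v : v \in s -> (forall y, y \in s -> y <= v) ->
  x0 <= v -> foldr Num.max x0 s = v.
Proof.
move=> vs allv vx.
have lb : foldr Num.max x0 s <= v.
  elim: s {vs} allv => [|a s IH] allv /=; first exact: vx.
  rewrite ge_max (allv a (mem_head a s)) /=; apply: IH => y ys; apply: allv.
  by rewrite in_cons ys orbT.
have ub : forall y, y \in s -> y <= foldr Num.max x0 s.
  elim: s {vs allv lb} => [|a s IH] //= y; rewrite in_cons => /orP[/eqP ->|ys].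
    by rewrite le_max lexx.
  by rewrite le_max (IH y ys) orbT.
by apply/eqP; rewrite eq_le lb ub.
Qed.

Lemma foldr_fst (D : diagram) x0 :
  foldr (fun b m => Num.min b.1 m) x0 D = foldr Num.min x0 (map fst D).
Proof. by elim: D => //= a D ->. Qed.
Lemma foldr_fst_max (D : diagram) x0 :
  foldr (fun b m => Num.max b.1 m) x0 D = foldr Num.max x0 (map fst D).
Proof. by elim: D => //= a D ->. Qed.

Lemma head_mem (T : eqType) (x : T) s : s != [::] -> head x s \in s.
Proof. by case: s => //= a s _; rewrite mem_head. Qed.

Lemma memPlace lam ro co b : b \in place lam ro co <->
  exists i j, [/\ (i < size lam)%N, (j < nth 0%N lam i)%N & b = (ro + Posz i.+1, co + Posz j.+1)].
Proof.
rewrite /place; split.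
  move=> /flattenP[s /mapP[i]]; rewrite mem_iota add0n => /andP[_ il] ->.
  move=> /mapP[j]; rewrite mem_iota add0n => /andP[_ jl] ->.
  by exists i, j.
move=> [i [j [il jl ->]]]; apply/flattenP.
exists [seq (ro + Posz i.+1, co + Posz j0.+1) | j0 <- iota 0 (nth 0%N lam i)].
  by apply/mapP; exists i => //; rewrite mem_iota add0n.
by apply/mapP; exists j => //; rewrite mem_iota add0n.
Qed.

Lemma translate_place lam ro co d :
  translate d (place lam ro co) = place lam (ro + d.1) (co + d.2).
Proof.
rewrite /translate /place map_flatten -map_comp; congr flatten.
apply: eq_map => i /=; rewrite -map_comp; apply: eq_map => j /=.
by congr (_, _); rewrite addrAC.
Qed.

Lemma countPlace lam ro co (P : pred box) : count P (place lam ro co) =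
  (\sum_(0 <= i < size lam) \sum_(0 <= j < nth 0%N lam i) P ((ro + Posz i.+1)%R, (co + Posz j.+1)%R))%N.
Proof.
rewrite /place count_flatten sumnE !big_map.
have -> : iota 0 (size lam) = index_iota 0 (size lam) by rewrite /index_iota subn0.
apply: eq_bigr => i _; rewrite count_map -sumn_count sumnE big_map.
by rewrite /index_iota subn0.
Qed.

Lemma top_place lam ro co : is_partition lam -> lam != [::] ->
  top_row (place lam ro co) = ro + 1.
Proof.
move=> /andP[srt pos] ln.
have mem00 : (ro + Posz 1, co + Posz 1) \in place lam ro co.
  apply/memPlace; exists 0%N, 0%N; split => //; first by rewrite lt0n size_eq0.
  by case: lam ln pos srt => //= a l _ /andP[].
rewrite /top_row foldr_fst; apply: foldr_min_eq.
- by apply/mapP; exists (ro + Posz 1, co + Posz 1).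
- move=> y /mapP[b /memPlace[i [j [_ _ ->]]] ->] /=.
  by rewrite lerD2l.
- have : head (0, 0) (place lam ro co) \in place lam ro co.
    by apply: head_mem; apply/eqP => e; rewrite e in mem00.
  by move=> /memPlace[i [j [_ _ ->]]] /=; rewrite lerD2l.
Qed.

Lemma rowmax_place lam ro co : is_partition lam -> lam != [::] ->
  max_col_in (place lam ro co) (ro + 1) = co + Posz (head 0%N lam).
Proof.
move=> /andP[srt pos] ln.
have L0 : (0 < head 0%N lam)%N by case: lam ln pos srt => //= a l _ /andP[].
have lamle : forall i, (i < size lam)%N -> (nth 0%N lam i <= head 0%N lam)%N.
  move=> i il; rewrite -nth0.
  have tr : transitive geq by move=> x y z /= h1 h2; apply: leq_trans h2 h1.
  have h := sorted_leq_nth tr (fun x => leqnn x) 0%N srt.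
  apply: (h 0%N i) => //; rewrite inE /=; first by rewrite lt0n size_eq0.
rewrite /max_col_in.
have memc : forall y, y \in cols_in_row (place lam ro co) (ro + 1) <->
    exists j, (j < head 0%N lam)%N /\ y = co + Posz j.+1.
  move=> y; rewrite /cols_in_row; split.
    move=> /mapP[b]; rewrite mem_filter => /andP[/eqP e /memPlace[i [j [il jl eb]]]] ->.
    subst b; have ei : i = 0%N by move: e => /=; lia.
    by subst i; exists j; split => //; rewrite -nth0.
  move=> [j [jl ->]]; apply/mapP; exists (ro + 1, co + Posz j.+1) => //.
  rewrite mem_filter eqxx /=; apply/memPlace; exists 0%N, j; split => //.
  - by rewrite lt0n size_eq0.
have mL : co + Posz (head 0%N lam) \in cols_in_row (place lam ro co) (ro + 1).
  apply/memc; exists (head 0%N lam).-1; split; first by rewrite prednK // leqnn.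
  by rewrite prednK.
apply: foldr_max_eq => //.
- by move=> y /memc[j [jl ->]]; rewrite lerD2l lez_nat.
- have : head 0 (cols_in_row (place lam ro co) (ro + 1)) \in cols_in_row (place lam ro co) (ro + 1).
    by apply: head_mem; apply/eqP => e; rewrite e in mL.
  by move=> /memc[j [jl ->]]; rewrite lerD2l lez_nat.
Qed.

Lemma read_le_nat (a b a' b' : nat) :
  read_le (Posz a, Posz b) (Posz a', Posz b') = (a < a')%N || ((a == a') && (b' <= b)%N).
Proof. rewrite /read_le /=; apply/idP/idP; lia. Qed.

Lemma rowlens_facts al : is_composition al -> al != [::] ->
  [/\ (0 < sumn al)%N,
      (forall r r', (r <= r')%N -> (r' < sumn al)%N ->
          (nth 0%N (Delta_rowlens al) r <= nth 0%N (Delta_rowlens al) r')%N),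
      (forall r, (r < sumn al)%N -> 0 < nth 0%N (Delta_rowlens al) r <= size al)%N
    & nth 0%N (Delta_rowlens al) (sumn al).-1 = size al].
Proof.
move=> comp aln.
have ll := @rowlens_last al comp aln.
have m0 : (0 < sumn al)%N.
  rewrite -size_rowlens lt0n size_eq0; apply/eqP => e.
  by move: ll; rewrite e /=; case: al aln {comp e}.
split => //.
- move=> r r' rr' r'm; apply: (sorted_leq_nth leq_trans leqnn 0%N (rowlens_sorted al)) => //.
    by rewrite inE size_rowlens (leq_ltn_trans rr' r'm).
  by rewrite inE size_rowlens.
- by move=> r rm; apply: rowlens_mem; rewrite mem_nth // size_rowlens.
- by rewrite -size_rowlens nth_last ll.
Qed.

Lemma bottom_left_Delta al : is_composition al -> al != [::] ->
  bottom_left (Delta al) = (Posz (sumn al), 1).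
Proof.
move=> comp aln; have [m0 lmono lb llast] := @rowlens_facts al comp aln.
set m := sumn al in m0 lmono lb llast *.
have memb : (Posz m, Posz 1) \in Delta al.
  apply/memDelta; exists m.-1, 0%N; split.
  - by rewrite ltn_predL.
  - have /andP[h1 h2] := lb m.-1 (ltac:(lia)); lia.
  - by rewrite llast subnn.
  - by rewrite prednK.
have rowsle : forall b, b \in Delta al -> b.1 <= Posz m.
  by move=> b /memDelta[r [c [rm _ _ ->]]] /=; rewrite lez_nat.
have hbot : bot_row (Delta al) = Posz m.
  rewrite /bot_row foldr_fst_max; apply: foldr_max_eq.
  - by apply/mapP; exists (Posz m, Posz 1).
  - by move=> y /mapP[b bD ->]; apply: rowsle.
  - apply: rowsle; apply: head_mem; apply/eqP => e; by rewrite e in memb.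
rewrite /bottom_left hbot; congr (_, _).
have memc : forall y, y \in cols_in_row (Delta al) (Posz m) -> 1 <= y.
  by move=> y /mapP[b]; rewrite mem_filter => /andP[_ /memDelta[r [c [_ _ _ ->]]]] -> /=.
have m1 : Posz 1 \in cols_in_row (Delta al) (Posz m).
  by apply/mapP; exists (Posz m, Posz 1) => //; rewrite mem_filter eqxx.
rewrite /min_col_in; apply: foldr_min_eq => //.
apply: memc; apply: head_mem; apply/eqP => e; by rewrite e in m1.
Qed.

Lemma Delta_nil : Delta [::] = [::].
Proof. by []. Qed.

Lemma lam_le_head lam i : is_partition lam -> (i < size lam)%N ->
  (nth 0%N lam i <= head 0%N lam)%N.
Proof.
move=> /andP[srt _] il; rewrite -nth0.
have tr : transitive geq by move=> x y z /= h1 h2; apply: leq_trans h2 h1.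
have h := sorted_leq_nth tr (fun x => leqnn x) 0%N srt.
by apply: (h 0%N i) => //; rewrite inE /= (leq_ltn_trans _ il).
Qed.

Lemma lam_pos lam i : is_partition lam -> (i < size lam)%N -> (0 < nth 0%N lam i)%N.
Proof. by move=> /andP[_ /allP pos] il; apply: pos; rewrite mem_nth. Qed.

Lemma ferrersE lam : ferrers lam = place lam 0 0.
Proof. by []. Qed.

Lemma dsum_shiftE lam al : is_partition lam -> lam != [::] -> is_composition al ->
  let d := dsum_shift (ferrers lam) (Delta al) in
  d.1 = Posz (sumn al) /\ (al != [::] -> d.2 = - Posz (head 0%N lam)).
Proof.
move=> lp ln comp /=.
rewrite /dsum_shift /top_right ferrersE top_place // add0r rowmax_place // add0r.
case: (altP (al =P [::])) => [->|aln]; first by rewrite Delta_nil /=; split.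
have [e1 e2] : bot_row (Delta al) = Posz (sumn al) /\ min_col_in (Delta al) (bot_row (Delta al)) = 1.
  by have := @bottom_left_Delta al comp aln; rewrite /bottom_left => -[-> ->].
rewrite e2 e1 addrK; split => // _; by rewrite subrr add0r.
Qed.

Lemma Gh_monoK n l K K' c : (K <= K')%N -> (Gh n l K c <= Gh n l K' c)%N.
Proof.
move=> /subnKC <-; elim: (K' - K)%N => [|x IH]; first by rewrite addn0.
by rewrite addnS GhS (leq_trans IH) // leq_addr.
Qed.

Lemma read_le_rows (a b : box) : b.1 < a.1 -> read_le a b = false.
Proof. by case: a b => [a1 a2] [b1 b2] /= h; rewrite /read_le /=; apply/negbTE; apply/negP; lia. Qed.

Lemma sum_row0 (lam : seq nat) (F : nat -> nat -> bool) : lam != [::] ->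
  (\sum_(0 <= i < size lam) \sum_(0 <= j < nth 0%N lam i) ((i == 0%N) && F i j) =
   \sum_(0 <= j < head 0%N lam) F 0%N j)%N.
Proof.
move=> ln; rewrite big_ltn ?lt0n ?size_eq0 //= nth0.
rewrite [X in (_ + X)%N]big1_seq ?addn0 //.
move=> i /andP[_]; rewrite mem_index_iota => /andP[i1 _].
by rewrite big1 // => j _; case: i i1.
Qed.

Theorem mainTheorem2 (al lam : seq nat) (k : nat) (T : box -> nat) :
  is_composition al ->
  is_partition lam ->
  (head 0%N lam <= size al + k)%N ->
  semistandard (direct_sum (ferrers lam) (Delta al)) T ->
  lattice (reading_word (direct_sum (ferrers lam) (Delta al)) T) ->
  (count (fun b : box =>
            (b.1 == top_row (lam_copy lam al)) && (T b == 1%N)) (lam_copy lam al)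
     <= k)%N ->
  semistandard (S_shape lam al k) (moved_tableau lam al k T) /\
  lattice (reading_word (S_shape lam al k) (moved_tableau lam al k T)).
Proof.
move=> comp lp hL ss lat ones.
set D := direct_sum (ferrers lam) (Delta al) in ss lat.
set d := dsum_shift (ferrers lam) (Delta al).
set m := sumn al; set n := size al; set L := head 0%N lam.
set l := fun r => nth 0%N (Delta_rowlens al) r.
have DE : D = place lam (0 + d.1) (0 + d.2) ++ Delta al.
  by rewrite /D /direct_sum -/d ferrersE translate_place.
have lcE : lam_copy lam al = place lam (0 + d.1) (0 + d.2).
  by rewrite /lam_copy -/d ferrersE translate_place.
set f := fun b : box => if b \in Delta al then b
                      else (b.1 - Posz m + d.1, b.2 + Posz k + d.2).
have movedE : forall b, moved_tableau lam al k T b = T (f b).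
  by move=> b; rewrite /moved_tableau /f; case: ifP.
have [tabD [rowD colD]] := ss.
have inD1 : forall b, b \in place lam (0 + d.1) (0 + d.2) -> b \in D.
  by move=> b h; rewrite DE mem_cat h.
have inD2 : forall b, b \in Delta al -> b \in D.
  by move=> b h; rewrite DE mem_cat h orbT.
have Drow : forall b, b \in Delta al -> 0 < b.1 <= Posz m.
  by move=> b /memDelta[r [c [rm _ _ ->]]] /=; rewrite lez_nat.
have hd1 : lam != [::] -> d.1 = Posz m by move=> ln; case: (@dsum_shiftE lam al lp ln comp).
have hd2 : lam != [::] -> al != [::] -> d.2 = - Posz L.
  by move=> ln; case: (@dsum_shiftE lam al lp ln comp).
have Fmem : forall b, b \in place lam (Posz m) (- Posz k) ->
    [/\ lam != [::], Posz m < b.1, b \notin Delta al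
      & f b = (b.1 + (d.1 - Posz m), b.2 + (Posz k + d.2))].
  move=> b bF.
  have ln : lam != [::].
    by move: bF => /memPlace[i [_ [il _ _]]]; apply/eqP => e; rewrite e in il.
  have r1 : Posz m < b.1 by move: bF => /memPlace[i [j [_ _ ->]]] /=; lia.
  have nD : b \notin Delta al by apply/negP => /Drow; lia.
  split => //; rewrite /f (negbTE nD); congr (_, _); ring.
have fD : forall b, b \in Delta al -> f b = b by move=> b h; rewrite /f h.
have fPlace : forall b, b \in place lam (Posz m) (- Posz k) ->
    f b \in place lam (0 + d.1) (0 + d.2).
  move=> b bF; have [_ _ _ ->] := Fmem b bF.
  move: bF => /memPlace[i [j [il jl ->]]]; apply/memPlace; exists i, j; split => //.
  congr (_, _) => /=; lia.
have fPlace2 : forall i j, (i < size lam)%N -> (j < nth 0%N lam i)%N ->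
    f (Posz m + Posz i.+1, - Posz k + Posz j.+1) = (0 + d.1 + Posz i.+1, 0 + d.2 + Posz j.+1).
  move=> i j il jl.
  have bF : (Posz m + Posz i.+1, - Posz k + Posz j.+1) \in place lam (Posz m) (- Posz k).
    by apply/memPlace; exists i, j.
  have [_ _ _ ->] := Fmem _ bF; congr (_, _) => /=; lia.
have LRc : al != [::] -> forall r c, (r < m)%N -> (c < n)%N -> (n - l r <= c)%N ->
    T (Posz r.+1, Posz c.+1) = Gh n l r.+1 c.
  move=> aln; have [m0 lmono lb llast] := @rowlens_facts al comp aln.
  apply: (@LR n m l (fun r c => T (Posz r.+1, Posz c.+1))).
  - exact: lmono.
  - move=> r c rm cn h; apply: tabD; apply: inD2; apply/memDelta; exists r, c; split => //.
  - move=> r c c' rm cc c'n h; apply: rowD => //=; try lia.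
    + apply: inD2; apply/memDelta; exists r, c; split => //; move: h cc; rewrite /l /n /=; lia.
    + apply: inD2; apply/memDelta; exists r, c'; split => //; move: h cc; rewrite /l /n /=; lia.
  - move=> r r' c rr' r'm cn h; apply: colD => //=; try lia.
    + apply: inD2; apply/memDelta; exists r, c; split => //; lia.
    + have := lmono r r' (ltnW rr') r'm.
      move=> hl; apply: inD2; apply/memDelta; exists r', c; split => //.
      by apply: leq_trans h; apply: leq_sub2l.
  - move=> R C j Rm Cn hRC j0.
    have := @lattice_cnt D T (Posz R.+1, Posz C.+1) j lat j0.
    rewrite DE !count_cat.
    have z : forall v, count (fun y => read_le y (Posz R.+1, Posz C.+1) && (T y == v))
                         (place lam (0 + d.1) (0 + d.2)) = 0%N.
      move=> v; rewrite (eq_in_count (a2 := pred0)) ?count_pred0 //.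
      move=> y /memPlace[i [j' [il jl ->]]].
      have ln : lam != [::] by apply/eqP => e; rewrite e in il.
      rewrite read_le_rows //; rewrite [X in _ < X]/fst hd1 // /=; lia.
    rewrite !z !add0n !countDelta /cntD.
    suff E : forall v, (\sum_(0 <= r < sumn al) \sum_(0 <= c < size al)
      ((size al - nth 0 (Delta_rowlens al) r <= c) &&
       (read_le (Posz r.+1, Posz c.+1) (Posz R.+1, Posz C.+1) && (T (Posz r.+1, Posz c.+1) == v))) =
      \sum_(0 <= r < m) \sum_(0 <= c < n)
      ((n - l r <= c) && ((r < R) || (r == R) && (C <= c)) && (T (Posz r.+1, Posz c.+1) == v)))%N.
      by rewrite !E.
    move=> v; apply: eq_sum_range => r _; apply: eq_sum_range => c _.
    by rewrite read_le_nat ltnS eqSS ltnS andbA.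
set X := fun j : nat => T (0 + d.1 + Posz 1, 0 + d.2 + Posz j.+1).
have inRow0 : forall j, (j < L)%N -> (0 + d.1 + Posz 1, 0 + d.2 + Posz j.+1) \in D.
  move=> j jL; apply: inD1; apply/memPlace; exists 0%N, j; split => //.
  by move: jL; rewrite /L; case: (lam).
have key : al != [::] -> lam != [::] -> forall c, (c < n)%N -> (c + k < L)%N ->
    (Gh n l m c < X (c + k))%N.
  move=> aln ln c cn ckL.
  have [m0 lmono lb llast] := @rowlens_facts al comp aln.
  apply: (@lamarg n L k c (Gh n l m) X (fun v => count (fun y => T y == v) (Delta al))) => //.
  - by move=> c1 c2 h; apply: Gh_mono.
  - move=> v; rewrite countDelta exchange_big /=; apply: eq_sum_range => c' c'n.
    rewrite -(colsum n l m c' v); apply: eq_sum_range => r rm.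
    case h: (size al - nth 0 (Delta_rowlens al) r <= c')%N => //=.
    by rewrite LRc.
  - move=> j j' jj' j'L; rewrite leq_eqVlt in jj'; case/orP: jj' => [/eqP ->//|jj'].
    apply: rowD; rewrite ?inRow0 //=; [exact: ltn_trans jj' j'L | lia].
  - by move=> j jL; apply: tabD; apply: inRow0.
  - move: ones; rewrite lcE top_place // countPlace.
    rewrite (@eq_sum_range (size lam) _ (fun i => (\sum_(0 <= j < nth 0%N lam i)
        ((i == 0%N) && (T ((0 + d.1 + Posz i.+1)%R, (0 + d.2 + Posz j.+1)%R) == 1%N)))%N)); last first.
      move=> i il; apply: eq_bigr => j _.
      congr (nat_of_bool (_ && _)); rewrite [X in X == _]/fst; apply/idP/idP; lia.
    by rewrite sum_row0.
  - move=> q w w0.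
    have := @lattice_cnt D T (0 + d.1 + Posz 1, 0 + d.2 + Posz q.+1) w lat w0.
    rewrite DE !count_cat !countPlace.
    have cD : forall v, count (fun y => read_le y (0 + d.1 + Posz 1, 0 + d.2 + Posz q.+1) && (T y == v))
                 (Delta al) = count (fun y => T y == v) (Delta al).
      move=> v; apply: eq_in_count => y yD.
      have := Drow y yD; rewrite /read_le hd1 // => h.
      have -> : y.1 < 0 + Posz m + Posz 1 by move: h; lia.
      by [].
    rewrite !cD.
    have cP : forall v, (\sum_(0 <= i < size lam) \sum_(0 <= j < nth 0%N lam i)
        read_le ((0 + d.1 + Posz i.+1)%R, (0 + d.2 + Posz j.+1)%R) ((0 + d.1 + Posz 1)%R, (0 + d.2 + Posz q.+1)%R) &&
          (T ((0 + d.1 + Posz i.+1)%R, (0 + d.2 + Posz j.+1)%R) == v) =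
        \sum_(0 <= j < L) ((q <= j) && (X j == v)))%N.
      move=> v; rewrite -(@sum_row0 lam (fun i j => (q <= j)%N && (T ((0 + d.1 + Posz i.+1)%R, (0 + d.2 + Posz j.+1)%R) == v))) //.
      apply: eq_bigr => i _; apply: eq_bigr => j _.
      rewrite andbA; congr (nat_of_bool (_ && _)).
      rewrite /read_le /=; apply/idP/idP; lia.
    by rewrite !cP => h; lia.
have SE : forall b, b \in S_shape lam al k = (b \in Delta al) || (b \in place lam (Posz m) (- Posz k)).
  by move=> b; rewrite /S_shape mem_cat.
split.
  split; [|split].
  - move=> b; rewrite SE movedE => /orP[bD|bF].
      by rewrite fD //; apply: tabD; apply: inD2.
    by apply: tabD; apply: inD1; apply: fPlace.
  - move=> b b'; rewrite !SE !movedE => /orP[bD|bF] /orP[b'D|b'F] e lt.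
    + by rewrite !fD //; apply: rowD => //; apply: inD2.
    + exfalso; have := Drow b bD; have [_ h _ _] := Fmem b' b'F; lia.
    + have := Drow b' b'D; have [_ h _ _] := Fmem b bF; lia.
    + apply: rowD; try (apply: inD1; apply: fPlace => //).
      * have [_ _ _ ->] := Fmem b bF; have [_ _ _ ->] := Fmem b' b'F; cbn [fst snd]; by rewrite e.
      * have [_ _ _ ->] := Fmem b bF; have [_ _ _ ->] := Fmem b' b'F; cbn [fst snd]; rewrite ltrD2r; exact: lt.
  - move=> b b'; rewrite !SE !movedE => /orP[bD|bF] /orP[b'D|b'F] e lt.
    + by rewrite !fD //; apply: colD => //; apply: inD2.
    +
      have aln : al != [::] by apply/eqP => e0; move: bD; rewrite e0.
      have [ln _ _ _] := Fmem b' b'F.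
      move: bD b'F e lt => /memDelta[r [c [rm cn hrc ->]]] /memPlace[i [j [il jl ->]]] e lt.
      rewrite fD; last by apply/memDelta; exists r, c.
      rewrite fPlace2 //.
      have jE : j = (c + k)%N by move: e => /=; lia.
      subst j.
      have ckL : (c + k < L)%N by apply: leq_trans jl _; apply: lam_le_head.
      rewrite LRc //.
      apply: leq_ltn_trans (@Gh_monoK n l r.+1 m c rm) _.
      apply: leq_trans (key aln ln c cn ckL) _.
      case: i il jl {lt e} => [|i] il jl; first by [].
      apply: ltnW; apply: colD => //=.
      * exact: inRow0.
      * apply: inD1; apply/memPlace; exists i.+1, (c + k)%N; split => //.
      * lia.
    + have := Drow b' b'D; have [_ h _ _] := Fmem b bF; lia.
    + apply: colD; try (apply: inD1; apply: fPlace => //).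
      * have [_ _ _ ->] := Fmem b bF; have [_ _ _ ->] := Fmem b' b'F; cbn [fst snd]; by rewrite e.
      * have [_ _ _ ->] := Fmem b bF; have [_ _ _ ->] := Fmem b' b'F; cbn [fst snd]; rewrite ltrD2r; exact: lt.
have fr : forall b, b \in S_shape lam al k -> (f b).1 = b.1.
  move=> b; rewrite SE => /orP[bD|bF]; first by rewrite fD.
  have [ln _ _ ->] := Fmem b bF; cbn [fst]; by rewrite hd1 // subrr addr0.
have fread : {in S_shape lam al k &, forall x y, read_le (f x) (f y) = read_le x y}.
  move=> x y xS yS; rewrite /read_le !fr //.
  case: (x.1 =P y.1) => ex /=; last by [].
  suff -> : ((f y).2 <= (f x).2) = (y.2 <= x.2) by [].
  move: xS yS; rewrite !SE => /orP[xD|xF] /orP[yD|yF].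
  - by rewrite !fD.
  - have [_ h _ _] := Fmem y yF; have /andP[_ h2] := Drow x xD.
    by move: h; rewrite -ex ltNge h2.
  - have [_ h _ _] := Fmem x xF; have /andP[_ h2] := Drow y yD.
    by move: h; rewrite ex ltNge h2.
  - have [_ _ _ ->] := Fmem x xF; have [_ _ _ ->] := Fmem y yF; cbn [snd].
    by rewrite lerD2r.
have rrefl : forall z, read_le z z by move=> z; rewrite /read_le eqxx lexx orbT.
have finj : {in S_shape lam al k &, injective f}.
  move=> x y xS yS e; apply: read_le_anti.
  by rewrite -(fread x y) // -(fread y x) // e rrefl.
have mapS : perm_eq (map f (S_shape lam al k)) D.
  rewrite /S_shape map_cat DE perm_catC (@map_id_in _ f (Delta al)); last first.
    by move=> b bD; apply: fD.
  rewrite perm_cat2r.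
  suff -> : map f (foundation lam al k) = place lam (0 + d.1) (0 + d.2) by [].
  rewrite /foundation.
  have -> : map f (place lam (Posz m) (- Posz k)) =
      translate (d.1 - Posz m, Posz k + d.2) (place lam (Posz m) (- Posz k)).
    by apply/eq_in_map => b bF; have [_ _ _ ->] := Fmem b bF.
  rewrite translate_place.
  have -> : Posz m + (d.1 - Posz m, Posz k + d.2).1 = 0 + d.1 by cbn [fst]; ring.
  by have -> : - Posz k + (d.1 - Posz m, Posz k + d.2).2 = 0 + d.2 by cbn [snd]; ring.
have rw : reading_word (S_shape lam al k) (moved_tableau lam al k T) = reading_word D T.
  rewrite /reading_word.
  have -> : [seq moved_tableau lam al k T b | b <- sort read_le (S_shape lam al k)] =
            map T (map f (sort read_le (S_shape lam al k))).
    by rewrite -map_comp; apply: eq_map => b; rewrite movedE.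
  rewrite -(@homo_sort_map_in box box [pred x | x \in S_shape lam al k] f read_le read_le).
  - congr (map T _); apply/perm_sortP => //.
    + exact: read_le_total.
    + exact: read_le_trans.
    + exact: read_le_anti.
  - move=> x y; rewrite !inE => xS yS /andP[h1 h2]; apply: finj => //.
    by apply: read_le_anti; apply/andP; split.
  - by move=> x y z _ _ _; apply: read_le_trans.
  - by move=> x y _ _; apply: read_le_total.
  - by move=> x y; rewrite !inE => xS yS; rewrite fread.
  - by apply/allP => x xS; rewrite inE.
by rewrite rw.
Qed.
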